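(* Let $\rho_T$ and $\rho_A$ be density matrices on $\mathbb{C}^2$ with eigenvalues, sorted in decreasing order, $\{\alpha, 1-\alpha\}$ and $\{\beta, 1-\beta\}$ respectively (so $\alpha,\beta \ge 1/2$). Let $U$ be any unitary on $\mathbb{C}^2\otimes\mathbb{C}^2$, and let $\rho_T^{out} = \mathrm{Tr}_A\!\left(U(\rho_T\otimes\rho_A)U^\dagger\right)$ have eigenvalues, sorted in decreasing order, $\{\alpha^{out}, 1-\alpha^{out}\}$. Then $$\alpha^{out} \le \max(\alpha,\beta).$$
   Context: $\mathrm{Tr}_A$ denotes the partial trace over the second (auxiliary) tensor factor; the first factor is the target qubit. *)

(* Defs.v *)
From HB Require Import structures.
From mathcomp Require Import all_boot all_order all_algebra.
From mathcomp Require Import complex mxtens.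
From mathcomp Require Import reals.
Set Implicit Arguments. Unset Strict Implicit. Unset Printing Implicit Defensive.
Import Order.TTheory GRing.Theory Num.Theory.
Local Open Scope ring_scope.
Local Open Scope complex_scope.

Section QDefs.
Variable R : realType.
Local Notation C := R[i].

Definition adjmx {m n} (A : 'M[C]_(m, n)) : 'M[C]_(n, m) :=
  (map_mx (@conjc R) A)^T.

Definition hermitian {n} (A : 'M[C]_n) : Prop := adjmx A = A.

Definition psd {n} (A : 'M[C]_n) : Prop :=
  forall v : 'cV[C]_n, 0 <= (adjmx v *m A *m v) 0 0.

Definition density {n} (A : 'M[C]_n) : Prop :=
  hermitian A /\ psd A /\ \tr A = 1.

Definition unitary {n} (U : 'M[C]_n) : Prop := U *m adjmx U = 1%:M.

(* partial trace over the second tensor factor of C^m (x) C^n,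
   with the index convention of tensmx (mxtens_index (i, k)). *)
Definition ptrace2 {m n} (M : 'M[C]_(m * n)) : 'M[C]_m :=
  \matrix_(i, j) \sum_(k < n) M (mxtens_index (i, k)) (mxtens_index (j, k)).

End QDefs.

(* Main.v *)
Require Import Defs.
From HB Require Import structures.
From mathcomp Require Import all_boot all_order all_algebra.
From mathcomp Require Import complex mxtens.
From mathcomp Require Import reals.
From mathcomp Require Import ring lra.
Import Order.TTheory GRing.Theory Num.Theory.
Local Open Scope ring_scope.
Local Open Scope complex_scope.
Section S.
Variable R : realType.
Local Notation C := R[i].
Local Notation cj := (@conjc R).
Ltac gen_cj := repeat match goal with |- context [conjc ?x] => let c := fresh "c" in set c := conjc x end.

Definition sq (z : C) : R := complex.Re z ^+ 2 + complex.Im z ^+ 2.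
Lemma sqE (z : C) : z * cj z = (sq z)%:C.
Proof.
case: z => a b; rewrite /sq /=; simpc.
by apply/eqP; rewrite eq_complex /=; apply/andP; split; apply/eqP; ring.
Qed.
Lemma sq_ge0 z : 0 <= sq z.
Proof. by rewrite /sq addr_ge0 // sqr_ge0. Qed.
Lemma sq_gt0 z : z != 0 -> 0 < sq z.
Proof.
move=> nz; rewrite lt_def sq_ge0 andbT; apply/negP => /eqP h.
move: nz; case: z h => a b; rewrite /sq /= => /eqP.
rewrite paddr_eq0 ?sqr_ge0 // !sqrf_eq0 => /andP[/eqP -> /eqP ->].
by rewrite eqxx.
Qed.
Lemma conjcR (x : R) : cj x%:C = x%:C.
Proof. exact: conjc_real. Qed.

Lemma cjD (x y : C) : cj (x + y) = cj x + cj y. Proof. exact: rmorphD. Qed.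
Lemma cjB (x y : C) : cj (x - y) = cj x - cj y. Proof. exact: rmorphB. Qed.
Lemma cjM (x y : C) : cj (x * y) = cj x * cj y. Proof. exact: rmorphM. Qed.
Lemma cjN (x : C) : cj (- x) = - cj x. Proof. exact: rmorphN. Qed.
Lemma cj1 : cj 1 = 1. Proof. exact: rmorph1. Qed.
Lemma cj0 : cj 0 = 0. Proof. exact: rmorph0. Qed.
Lemma cjV (x : C) : cj (x^-1) = (cj x)^-1. Proof. exact: conjc_inv. Qed.
Lemma lincomb (g e1 e2 e3 c1 c2 c3 : C) : g = c1 * e1 + c2 * e2 + c3 * e3 ->
  e1 = 0 -> e2 = 0 -> e3 = 0 -> g = 0.
Proof. by move=> -> -> -> ->; rewrite !mulr0 !addr0. Qed.
Lemma rC1B (x : R) : (1 - x)%:C = 1 - x%:C :> C.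
Proof. by rewrite rmorphB rmorph1. Qed.
Lemma rCD (x y : R) : (x + y)%:C = x%:C + y%:C :> C. Proof. exact: rmorphD. Qed.
Lemma rCB (x y : R) : (x - y)%:C = x%:C - y%:C :> C. Proof. exact: rmorphB. Qed.
Lemma rCM (x y : R) : (x * y)%:C = x%:C * y%:C :> C. Proof. exact: rmorphM. Qed.
Lemma rCsum I (r : seq I) (P : pred I) (F : I -> R) :
  (\sum_(i <- r | P i) F i)%:C = \sum_(i <- r | P i) (F i)%:C :> C.
Proof. exact: rmorph_sum. Qed.
Lemma ord2P (i : 'I_2) : i = 0 \/ i = 1.
Proof. by case: i => [[|[|k]]] //= H; [left|right]; apply: val_inj. Qed.
Lemma sum2 (T : nmodType) (F : 'I_2 -> T) : \sum_(i < 2) F i = F 0 + F 1.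
Proof.
rewrite big_ord_recl big_ord1; congr (_ + F _); exact: val_inj.
Qed.
Lemma adjmxE m n (A : 'M[C]_(m, n)) i j : adjmx A i j = cj (A j i).
Proof. by rewrite /adjmx !mxE. Qed.
Lemma adjmxK m n (A : 'M[C]_(m, n)) : adjmx (adjmx A) = A.
Proof. by apply/matrixP => i j; rewrite !adjmxE conjcK. Qed.
Lemma adjmx_mul m n p (A : 'M[C]_(m, n)) (B : 'M[C]_(n, p)) :
  adjmx (A *m B) = adjmx B *m adjmx A.
Proof. by rewrite /adjmx map_mxM trmx_mul. Qed.
Lemma adjmx_tens m n p q (A : 'M[C]_(m, n)) (B : 'M[C]_(p, q)) :
  adjmx (A *t B) = adjmx A *t adjmx B.
Proof. by rewrite /adjmx map_mxT trmx_tens. Qed.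
Lemma mx2P (A B : 'M[C]_2) : A 0 0 = B 0 0 -> A 0 1 = B 0 1 -> A 1 0 = B 1 0 ->
  A 1 1 = B 1 1 -> A = B.
Proof.
move=> h1 h2 h3 h4; apply/matrixP => i j.
by case: (ord2P i) => ->; case: (ord2P j) => ->.
Qed.
Lemma sum_tens m n (T : nmodType) (F : 'I_(m * n) -> T) :
  \sum_(x < m * n) F x = \sum_(i < m) \sum_(k < n) F (mxtens_index (i, k)).
Proof.
rewrite pair_big /=.
rewrite (reindex (@mxtens_index m n)) /=; last first.
  by exists (@mxtens_unindex m n) => x _; [rewrite mxtens_indexK|rewrite mxtens_unindexK].
by apply: eq_bigr => -[i k].
Qed.
Lemma tens11 m n : (1%:M : 'M[C]_m) *t (1%:M : 'M[C]_n) = 1%:M.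
Proof.
apply/matrixP => x y; case: (mxtens_indexP x) => i k; case: (mxtens_indexP y) => j l.
rewrite tensmxE !mxE (inj_eq (can_inj (@mxtens_indexK m n))) xpair_eqE.
by case: (i == j); case: (k == l); rewrite ?mulr1 ?mulr0.
Qed.
Lemma rowpos n (u : 'rV[C]_n) : u != 0 -> 0 < \sum_j sq (u 0 j).
Proof.
move=> nz.
have [j hj] : exists j, u 0 j != 0.
  apply/existsP; rewrite -[X in is_true X]negbK negb_exists; apply/negP => /forallP h.
  apply: (negP nz); apply/eqP/matrixP => i j; rewrite ord1 mxE; exact/eqP/negPn/(h j).
rewrite (bigD1 j) //= ltr_wpDr ?sq_gt0 //.
by apply: sumr_ge0 => k _; exact: sq_ge0.
Qed.
Lemma rownorm n (u : 'rV[C]_n) : (u *m adjmx u) 0 0 = (\sum_j sq (u 0 j))%:C.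
Proof.
rewrite mxE rmorph_sum; apply: eq_bigr => j _; by rewrite adjmxE sqE.
Qed.
Lemma eig_ge0 n (rho : 'M[C]_n) (u : 'rV[C]_n) (x : R) :
  psd rho -> u != 0 -> u *m rho = x%:C *: u -> 0 <= x.
Proof.
move=> hp nz h.
have := hp (adjmx u); rewrite adjmxK h -scalemxAl mxE rownorm -rmorphM ler0c.
by rewrite pmulr_lge0 // rowpos.
Qed.
Lemma spec2 (rho : 'M[C]_2) (x : R) : density rho -> eigenvalue rho x%:C ->
  exists V : 'M[C]_2, V *m adjmx V = 1%:M /\
    rho = adjmx V *m diag_mx (\row_i (if i == 0 then x else 1 - x)%:C) *m V.
Proof.
case => hh [hp ht] /eigenvalueP [u hu nz].
set s := \sum_j sq (u 0 j). have s0 : 0 < s by apply: rowpos.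
set r := Num.sqrt s. have r0 : 0 < r by rewrite sqrtr_gt0.
have rC0 : r%:C != 0 by rewrite eq_complex /= eqxx andbT gt_eqF.
set w := (r%:C)^-1 *: u.
have hw : w *m rho = x%:C *: w by rewrite /w -scalemxAl hu !scalerA mulrC.
set a := w 0 0; set b := w 0 1.
have hN : a * cj a + b * cj b = 1.
  have hs : u 0 0 * cj (u 0 0) + u 0 1 * cj (u 0 1) = r%:C * r%:C.
    by rewrite !sqE -rmorphD -rmorphM -expr2 sqr_sqrtr ?ltW // /s sum2.
  rewrite /a /b !mxE !cjM cjV conjcR.
  have -> : forall (t u0 u1 v0 v1 : C), t^-1 * u0 * (t^-1 * v0) + t^-1 * u1 * (t^-1 * v1)
      = (t * t)^-1 * (u0 * v0 + u1 * v1) by move=> *; rewrite invfM; ring.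
  by rewrite hs mulVf // mulf_neq0.
have e10 : (1 == 0 :> 'I_2) = false by [].
have hq : rho 1 0 = cj (rho 0 1) by rewrite -{1}hh adjmxE.
have hpr : cj (rho 0 0) = rho 0 0 by rewrite -{2}hh adjmxE.
have h11 : rho 1 1 = 1 - rho 0 0 by move: ht; rewrite /mxtrace sum2 => <-; ring.
set p := rho 0 0; set q := rho 0 1.
have E0 : a * p + b * cj q - x%:C * a = 0.
  by have := congr1 (fun M : 'M[C]_(1,2) => M 0 0) hw; rewrite !mxE sum2 hq => ->; rewrite /a mxE subrr.
have E1 : a * q + b * (1 - p) - x%:C * b = 0.
  by have := congr1 (fun M : 'M[C]_(1,2) => M 0 1) hw; rewrite !mxE sum2 h11 => ->; rewrite /b mxE subrr.
have E0c : cj a * p + cj b * q - x%:C * cj a = 0.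
  by have := congr1 cj E0; rewrite !cjB !cjD !cjM conjcK hpr conjcR cj0.
have E1c : cj a * cj q + cj b * (1 - p) - x%:C * cj b = 0.
  by have := congr1 cj E1; rewrite !cjB !cjD !cjM !cjB cj1 hpr conjcR cj0.
pose V : 'M[C]_2 := \matrix_(i, j) (if i == 0 then (if j == 0 then a else b) else (if j == 0 then - cj b else cj a)).
exists V; split.
  apply: mx2P; rewrite !mxE !sum2 !adjmxE !mxE /= ?e10 ?eqxx /=.
  - exact: hN.
  - by rewrite cjN !conjcK; gen_cj; ring.
  - by gen_cj; ring.
  - by rewrite cjN !conjcK -hN; gen_cj; ring.
have hN' : a * cj a + b * cj b - 1 = 0 by rewrite hN subrr.
apply: mx2P; rewrite mul_mx_diag !mxE !sum2 !mxE /= ?e10 ?eqxx /=.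
all: rewrite ?h11 ?hq -/p -/q ?cjN ?conjcK !rC1B; apply/eqP; rewrite -subr_eq0; apply/eqP.
- by apply: (lincomb _ _ _ _ (cj a) (- b) (- p) _ E0 E1c hN'); gen_cj; ring.
- by apply: (lincomb _ _ _ _ (cj a) b (- q) _ E1 E0c hN'); gen_cj; ring.
- by apply: (lincomb _ _ _ _ a (cj b) (- cj q) _ E1c E0 hN'); gen_cj; ring.
- by apply: (lincomb _ _ _ _ (- cj a) b (p - 1) _ E0 E1c hN'); gen_cj; ring.
Qed.
Lemma cs2 (v0 v1 c0 c1 : C) :
  sq (v0 * c0 + v1 * c1) <= (sq v0 + sq v1) * (sq c0 + sq c1).
Proof.
rewrite -subr_ge0.
have -> : (sq v0 + sq v1) * (sq c0 + sq c1) - sq (v0 * c0 + v1 * c1)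
   = sq (v0 * cj c1 - v1 * cj c0).
  apply: complexI; rewrite rCB rCM 2!rCD -!sqE.
  rewrite !cjB !cjD !cjM !conjcK; gen_cj; ring.
exact: sq_ge0.
Qed.
Lemma sqsumE I (r : seq I) (F : I -> C) :
  (\sum_(i <- r) sq (F i))%:C = \sum_(i <- r) F i * cj (F i).
Proof. by rewrite rCsum; apply: eq_bigr => i _; rewrite sqE. Qed.

Lemma core (U : 'M[C]_(2*2)) (f : 'I_(2*2) -> R) (v : 'rV[C]_2) (l : R) :
  U *m adjmx U = 1%:M -> v != 0 ->
  v *m ptrace2 (U *m diag_mx (\row_a (f a)%:C) *m adjmx U) = l%:C *: v ->
  exists P : 'I_(2*2) -> R, exists n : R,
    [/\ 0 < n, l * n = \sum_a f a * P a, forall a, 0 <= P a <= n & \sum_a P a = 2%:R * n].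
Proof.
move=> hU nz hv.
have hU' : adjmx U *m U = 1%:M by apply: mulmx1C.
pose z k a := \sum_i v 0 i * U (mxtens_index (i, k)) a.
pose n := \sum_j sq (v 0 j).
exists (fun a => \sum_k sq (z k a)), n; split.
- exact: rowpos.
- apply: complexI; rewrite rCM [RHS]rCsum.
  have <- : ((v *m ptrace2 (U *m diag_mx (\row_a (f a)%:C) *m adjmx U)) *m adjmx v) 0 0 = l%:C * n%:C.
    by rewrite hv -scalemxAl mxE rownorm.
  under eq_bigr do rewrite rCM sqsumE.
  rewrite mxE !sum2 !adjmxE !mxE !sum2 /ptrace2 !mxE !sum2 !mul_mx_diag.
  rewrite !mxE !sum_tens !sum2 !adjmxE !mxE /z !sum2 !cjD !cjM; gen_cj. ring.
- move=> a; apply/andP; split; first by apply: sumr_ge0 => k _; exact: sq_ge0.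
  have hcol : \sum_x sq (U x a) = 1.
    apply: complexI; rewrite sqsumE rmorph1.
    have := congr1 (fun M : 'M[C]_(2*2) => M a a) hU'; rewrite !mxE eqxx /= => h; apply: (etrans _ h).
    by apply: eq_bigr => x _; rewrite adjmxE mulrC.
  apply: le_trans (_ : \sum_k n * (sq (U (mxtens_index (0,k)) a) + sq (U (mxtens_index (1,k)) a)) <= _).
    by apply: ler_sum => k _; rewrite /z /n !sum2; exact: cs2.
  rewrite -mulr_sumr -[X in _ <= X]mulr1 -hcol.
  have -> : \sum_k (sq (U (mxtens_index (0,k)) a) + sq (U (mxtens_index (1,k)) a)) = \sum_x sq (U x a).
    by rewrite sum_tens !sum2; ring.
  exact: lexx.
- have e10 : (1 == 0 :> 'I_2) = false by [].
  have e01 : (0 == 1 :> 'I_2) = false by [].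
  have hz : forall k, (\sum_a sq (z k a))%:C = \sum_i \sum_j v 0 i * cj (v 0 j) * (U *m adjmx U) (mxtens_index (i,k)) (mxtens_index (j,k)).
    move=> k; rewrite sqsumE !sum2 !mxE !sum_tens !sum2 !adjmxE /z !sum2 !cjD !cjM; gen_cj; ring.
  have hk : forall k, \sum_a sq (z k a) = n.
    move=> k; apply: complexI; rewrite hz hU !sum2 !mxE !(inj_eq (can_inj (@mxtens_indexK 2 2))) !xpair_eqE !eqxx /=.
    rewrite /n sum2 rCD -!sqE; gen_cj; ring.
  rewrite exchange_big /=; under eq_bigr do rewrite hk.
  by rewrite sumr_const card_ord mulr_natl.
Qed.
Lemma diag_tens m n (d1 : 'rV[C]_m) (d2 : 'rV[C]_n) :
  diag_mx d1 *t diag_mx d2 =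
  diag_mx (\row_a (d1 0 (mxtens_unindex a).1 * d2 0 (mxtens_unindex a).2)).
Proof.
apply/matrixP => x y; case: (mxtens_indexP x) => i k; case: (mxtens_indexP y) => j l.
rewrite tensmxE !mxE mxtens_indexK (inj_eq (can_inj (@mxtens_indexK m n))) xpair_eqE /=.
by case: (i == j); case: (k == l); rewrite ?mulr1n ?mulr0n ?mulr0 ?mul0r.
Qed.
End S.

Theorem theorem1 (R : realType) (rhoT rhoA : 'M[R[i]]_2)
  (U : 'M[R[i]]_(2 * 2)) (alpha beta alpha_out : R) :
  density rhoT -> density rhoA -> unitary U ->
  eigenvalue rhoT alpha%:C -> eigenvalue rhoT (1 - alpha)%:C -> 1 / 2 <= alpha ->
  eigenvalue rhoA beta%:C -> eigenvalue rhoA (1 - beta)%:C -> 1 / 2 <= beta ->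
  let rho_out := ptrace2 (U *m (rhoT *t rhoA) *m adjmx U) in
  eigenvalue rho_out alpha_out%:C -> eigenvalue rho_out (1 - alpha_out)%:C ->
  1 / 2 <= alpha_out ->
  alpha_out <= Num.max alpha beta.
Proof.
move=> dT dA hU eT eT' ha eA eA' hb rho_out eo _ _.
have a1 : 0 <= 1 - alpha.
  case/eigenvalueP: eT' => u hu nz; exact: (eig_ge0 _ _ _ _ _ dT.2.1 nz hu).
have b1 : 0 <= 1 - beta.
  case/eigenvalueP: eA' => u hu nz; exact: (eig_ge0 _ _ _ _ _ dA.2.1 nz hu).
case: (spec2 _ _ _ dT eT) => V [hV eV]; case: (spec2 _ _ _ dA eA) => W [hW eW].
pose dTf (i : 'I_2) := if i == 0 then alpha else 1 - alpha.
pose dAf (i : 'I_2) := if i == 0 then beta else 1 - beta.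
pose f (a : 'I_(2*2)) := dTf (mxtens_unindex a).1 * dAf (mxtens_unindex a).2.
pose G := V *t W.
have hD : rhoT *t rhoA = adjmx G *m diag_mx (\row_a (f a)%:C) *m G.
  rewrite eV eW -tensmx_mul -tensmx_mul /G adjmx_tens diag_tens; congr (_ *m diag_mx _ *m _).
  by apply/matrixP => i j; rewrite !mxE rCM.
have hG : adjmx G *m G = 1%:M.
  by rewrite /G adjmx_tens tensmx_mul (mulmx1C hV) (mulmx1C hW) tens11.
pose U' := U *m adjmx G.
have hU' : U' *m adjmx U' = 1%:M.
  by rewrite /U' adjmx_mul adjmxK mulmxA -(mulmxA U) hG mulmx1.
have hro : rho_out = ptrace2 (U' *m diag_mx (\row_a (f a)%:C) *m adjmx U').
  by rewrite /rho_out hD /U' adjmx_mul adjmxK !mulmxA.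
move: eo; rewrite hro => /eigenvalueP [v hv nz].
case: (core _ _ _ _ _ hU' nz hv) => P [n [n0 hsum hP hP2]].
move: hsum hP2; rewrite !sum_tens !sum2 /f !mxtens_indexK /dTf /dAf /=.
set p00 := P (mxtens_index (0, 0)); set p01 := P (mxtens_index (0, 1)).
set p10 := P (mxtens_index (1, 0)); set p11 := P (mxtens_index (1, 1)).
move=> hs hs2.
have := hP (mxtens_index (0, 0)); have := hP (mxtens_index (0, 1)).
have := hP (mxtens_index (1, 0)); have := hP (mxtens_index (1, 1)).
rewrite -/p00 -/p01 -/p10 -/p11 => /andP[h11 h11'] /andP[h10 h10'] /andP[h01 h01'] /andP[h00 h00'].
have hb1 : 0 <= 2 * beta - 1 by lra.
have ha1 : 0 <= 2 * alpha - 1 by lra.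
rewrite -(ler_pM2r n0).
case: (lerP beta alpha) => hab.
- rewrite hs.
  have k1 : 0 <= alpha * (2 * beta - 1) * (n - p00) by apply: mulr_ge0; [apply: mulr_ge0|]; lra.
  have k2 : 0 <= (alpha - beta) * p10 by apply: mulr_ge0; lra.
  have k3 : 0 <= (2 * alpha - 1) * (1 - beta) * p11 by apply: mulr_ge0; [apply: mulr_ge0|]; lra.
  nra.
- rewrite hs.
  have k1 : 0 <= beta * (2 * alpha - 1) * (n - p00) by apply: mulr_ge0; [apply: mulr_ge0|]; lra.
  have k2 : 0 <= (beta - alpha) * p01 by apply: mulr_ge0; lra.
  have k3 : 0 <= (2 * beta - 1) * (1 - alpha) * p11 by apply: mulr_ge0; [apply: mulr_ge0|]; lra.
  nra.
Qed.
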